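(* Let $\mathcal{M}=(\mathbf{x},\mathbf{p})$ be an auction format, let $\boldsymbol{\pi}^{(1)},\dots,\boldsymbol{\pi}^{(n)}\in\Delta([K+1])$ be quantile strategies, let $s_i:=s_{i,\boldsymbol{\pi}^{(i)}}$, and let $\tilde{\mathcal{M}}=(\tilde{\mathbf{x}},\tilde{\mathbf{p}})$ be the auxiliary auction defined by $\tilde{\mathbf{x}}(\mathbf{v}):=\mathbf{x}(s_1(v_1),\dots,s_n(v_n))$ and $\tilde p_i(\mathbf{v}):=\tilde x_i(v_i,\mathbf{v}_{-i})v_i-\int_0^{v_i}\tilde x_i(z,\mathbf{v}_{-i})dz$. Then, writing $\Pi^{(i)}_j:=\sum_{\ell\le j}\pi^{(i)}_\ell$ and $\mathbf{b}_{-i}:=(s_\ell(v_\ell))_{\ell\ne i}$, \[ \mathbb{E}_{\mathbf{v}\sim\mathcal{D}}\Big[\sum_{i\in[n]}\tilde p_i(\mathbf{v})\Big]=\sum_{i\in[n]}\mathbb{E}_{\mathbf{v}_{-i}}\Big[\sum_{j=1}^{K}\sum_{k=j+1}^{K+1}\pi^{(i)}_k\Big(x_i\big(\tfrac{j}{K},\mathbf{b}_{-i}\big)-x_i\big(\tfrac{j-1}{K},\mathbf{b}_{-i}\big)\Big)F_i^{-1}\big(\Pi^{(i)}_j\big)\Big]. \]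
   Context: Each bidder $i\in[n]$ has value $v_i$ drawn independently from a continuous distribution $\mathcal{D}_i$ on $[0,1]$ with CDF $F_i$ and quantile function $F_i^{-1}(y):=\inf\{v\in[0,1]:F_i(v)\ge y\}$; $\mathcal{D}:=\mathcal{D}_1\times\cdots\times\mathcal{D}_n$. Bid set $B:=\{j/K:j=0,\dots,K\}$. An auction format is $(\mathbf{x},\mathbf{p})$, $\mathbf{x}:B^n\to\Delta([n])$ (nonnegative entries summing to at most 1), $\mathbf{p}:B^n\to[0,1]^n$. For a quantile strategy $\boldsymbol{\pi}\in\Delta([K+1])$ (probability simplex), with $\Pi_0:=0$, $\Pi_j:=\sum_{\ell\le j}\pi_\ell$, the strategy $s_{i,\boldsymbol{\pi}}$ bids $0$ on $[0,F_i^{-1}(\Pi_1)]$ and $\frac{j-1}{K}$ on $(F_i^{-1}(\Pi_{j-1}),F_i^{-1}(\Pi_j)]$ for $j=2,\dots,K+1$. *)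

(* Defs.v *)
From HB Require Import structures.
From mathcomp Require Import all_boot all_order all_algebra.
From mathcomp Require Import all_classical all_reals all_analysis.
Set Implicit Arguments. Unset Strict Implicit. Unset Printing Implicit Defensive.
Import Order.TTheory GRing.Theory Num.Theory numFieldNormedType.Exports.
Local Open Scope classical_set_scope.
Local Open Scope ring_scope.

(* Bids are represented by their index j : 'I_K.+1, standing for the bid j/K. *)

Definition cdfF (R : realType) (mu : probability R R) (v : R) : R :=
  fine (mu `]-oo, v]%classic).

Definition qf (R : realType) (mu : probability R R) (y : R) : R :=
  inf [set v : R | 0 <= v <= 1 /\ y <= cdfF mu v].

(* Pi_j = sum_{l <= j} pi_l in the paper's 1-based indexing;
   pi is stored 0-based: paper pi_l = pi (l-1). *)
Definition Pi (R : realType) (K : nat) (pi : 'I_K.+1 -> R) (j : nat) : R :=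
  \sum_(l < K.+1 | (l < j)%N) pi l.

(* Quantile strategy s_{i,pi}: bids index 0 on (-oo, F^{-1}(Pi_1)] and index l
   (i.e. bid l/K) on (F^{-1}(Pi_l), F^{-1}(Pi_{l+1})], l = 1..K. *)
Definition qbid (R : realType) (K : nat) (pi : 'I_K.+1 -> R) (Finv : R -> R)
  (v : R) : 'I_K.+1 :=
  inord (\max_(l < K.+1 | (l == 0%N :> nat) || (Finv (Pi pi l) < v)) (l : nat)).

Definition updv (R : realType) (n : nat) (v : 'I_n -> R) (i : 'I_n) (z : R)
  : 'I_n -> R := fun l => if l == i then z else v l.

Definition bprofile (R : realType) (n K : nat) (s : 'I_n -> R -> 'I_K.+1)
  (v : 'I_n -> R) : {ffun 'I_n -> 'I_K.+1} := [ffun l => s l (v l)].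

Definition bprofile_i (R : realType) (n K : nat) (s : 'I_n -> R -> 'I_K.+1)
  (v : 'I_n -> R) (i : 'I_n) (j : 'I_K.+1) : {ffun 'I_n -> 'I_K.+1} :=
  [ffun l => if l == i then j else s l (v l)].

Definition xtilde (R : realType) (n K : nat)
  (x : {ffun 'I_n -> 'I_K.+1} -> 'I_n -> R) (s : 'I_n -> R -> 'I_K.+1)
  (v : 'I_n -> R) (i : 'I_n) : R := x (bprofile s v) i.

Definition ptilde (R : realType) (n K : nat)
  (x : {ffun 'I_n -> 'I_K.+1} -> 'I_n -> R) (s : 'I_n -> R -> 'I_K.+1)
  (v : 'I_n -> R) (i : 'I_n) : R :=
  xtilde x s v i * v i
  - Rintegral lebesgue_measure `[0, v i]%classic
      (fun z => xtilde x s (updv v i z) i).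

(* Iterated integration of f against D_k for every coordinate k < m with S k
   (coordinates not in S keep their value from v). *)
Fixpoint iterE (R : realType) (n : nat) (D : 'I_n -> probability R R)
  (S : pred 'I_n) (m : nat) (f : ('I_n -> R) -> \bar R) (v : 'I_n -> R)
  : \bar R :=
  match m with
  | 0 => f v
  | m'.+1 =>
    match (insub m' : option 'I_n) with
    | Some k => if S k then
                  (\int[D k]_z iterE D S m' f (updv v k z))%E
                else iterE D S m' f v
    | None => iterE D S m' f v
    end
  end.

(* E_{v ~ D}[f(v)] for D = D_1 x ... x D_n (as an iterated integral). *)
Definition Eprod (R : realType) (n : nat) (D : 'I_n -> probability R R)
  (f : ('I_n -> R) -> \bar R) : \bar R :=
  iterE D predT n f (fun _ => 0).

(* E_{v_{-i}}[f(v)] for f not depending on v_i. *)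
Definition Eminus (R : realType) (n : nat) (D : 'I_n -> probability R R)
  (i : 'I_n) (f : ('I_n -> R) -> \bar R) : \bar R :=
  iterE D (predC1 i) n f (fun _ => 0).

(* Main.v *)
Require Import Defs.
Set Warnings "-notation-overridden,-ambiguous-paths,-notation-incompatible-prefix,-deprecated".
From HB Require Import structures.
From mathcomp Require Import all_boot all_order all_algebra.
From mathcomp Require Import all_classical all_reals all_analysis.
From mathcomp Require Import ring lra measurable_realfun.
Import Order.TTheory GRing.Theory Num.Theory numFieldNormedType.Exports.
Local Open Scope classical_set_scope.
Local Open Scope ring_scope.
Set Implicit Arguments. Unset Strict Implicit. Unset Printing Implicit Defensive.
Section Lin.
Context d (T : measurableType d) (R : realType) (mu : {measure set T -> \bar R}).

Lemma int_lin (D : set T) (mD : measurable D) (I : Type) (r : seq I) (P : pred I)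
  (c : I -> R) (f : I -> T -> R)
  (Hf : forall t, mu.-integrable D (EFin \o f t)) :
  (\int[mu]_(z in D) (\sum_(t <- r | P t) c t * f t z)%:E
   = (\sum_(t <- r | P t) c t * Rintegral mu D (f t))%:E)%E.
Proof.
under eq_integral do rewrite -sumEFin.
rewrite integral_sum //; last first.
  move=> t; apply: (@eq_integrable _ _ _ mu D mD (fun x => (c t)%:E * (EFin \o f t) x)%E).
    by move=> x _; rewrite EFinM.
  exact: integrableZl.
rewrite -sumEFin; apply: eq_bigr => t _.
rewrite (eq_integral (fun x => (c t)%:E * (f t x)%:E)%E); last by move=> x _.
rewrite integralZl //; last exact: Hf.
rewrite EFinM; congr (_ * _)%E.
by rewrite /Rintegral fineK //; exact: (integrable_fin_num mD (Hf t)).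
Qed.

End Lin.
Section Iter.
Context (R : realType) (n : nat) (D : 'I_n -> probability R R).

Lemma ltS_neq (k k0 : 'I_n) m : val k0 = m -> k != k0 -> (k < m)%N = (k < m.+1)%N.
Proof.
move=> <- hk; rewrite ltnS [in RHS]leq_eqVlt.
by case: eqP => // h; move: hk; rewrite (val_inj h) eqxx.
Qed.

Lemma iterE_prod (S : pred 'I_n) (T : finType) (phi : T -> 'I_n -> R -> R)
  (Hint : forall t k, S k -> (D k).-integrable setT (EFin \o phi t k)) m v :
  iterE D S m (fun w => (\sum_t \prod_(k < n) phi t k (w k))%:E) v =
  (\sum_t \prod_(k < n) (if ((k < m)%N && S k) then Rintegral (D k) setT (phi t k)
                         else phi t k (v k)))%:E.
Proof.
elim: m v => [|m IH] v /=.
  congr EFin; apply: eq_bigr => t _; apply: eq_bigr => k _.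
case: insubP => [k0 _ Hk0|Hn].
  case HS: (S k0).
    under eq_integral do rewrite IH.
    pose A t := \prod_(k < n | k != k0)
      (if ((k < m.+1)%N && S k) then Rintegral (D k) setT (phi t k) else phi t k (v k)).
    rewrite (eq_integral (fun z => (\sum_t A t * phi t k0 z)%:E)); last first.
      move=> z _; congr EFin; apply: eq_bigr => t _.
      rewrite (bigD1 k0) //= Hk0 ltnn /= /updv eqxx mulrC; congr (_ * _).
      apply: eq_bigr => k hk; rewrite (negbTE hk).
      by rewrite (ltS_neq Hk0 hk).
    rewrite (@int_lin _ _ _ (D k0) setT measurableT); last by move=> t; exact: Hint.
    congr EFin; apply: eq_bigr => t _.
    rewrite (bigD1 k0) //= Hk0 ltnSn HS /= mulrC.
    by [].
  rewrite IH; congr EFin; apply: eq_bigr => t _; apply: eq_bigr => k _.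
  case: (eqVneq k k0) => [->|hk]; first by rewrite HS !andbF.
  by rewrite (ltS_neq Hk0 hk).
rewrite IH; congr EFin; apply: eq_bigr => t _; apply: eq_bigr => k _.
have -> : (k < m)%N = (k < m.+1)%N.
  have := ltn_ord k; rewrite -ltnNge ltnS in Hn => h.
  by rewrite (leq_trans h Hn) (leq_trans h (leqW Hn)).
by [].
Qed.

End Iter.
Section Q.
Context (R : realType) (mu : probability R R)
  (H01 : mu `[0, 1]%classic = 1%E) (Hc : continuous (cdfF mu)).

Lemma cdf_fin (v : R) : mu `]-oo, v]%classic \is a fin_num.
Proof. by rewrite fin_num_measure. Qed.

Lemma cdf_ge0 v : 0 <= cdfF mu v.
Proof. by rewrite /cdfF fine_ge0. Qed.

Lemma cdf_le1 v : cdfF mu v <= 1.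
Proof. by rewrite /cdfF -lee_fin fineK ?cdf_fin // probability_le1. Qed.

Lemma muC01 : mu (~` `[0, 1]%classic) = 0%E.
Proof. by rewrite probability_setC // H01 subee. Qed.

Lemma cdf_neg v : v < 0 -> cdfF mu v = 0.
Proof.
move=> v0; apply/eqP; rewrite eq_le cdf_ge0 andbT /cdfF -lee_fin fineK ?cdf_fin //.
rewrite (_ : 0%:E = mu (~` `[0, 1]%classic)); last by rewrite muC01.
rewrite le_measure ?inE //; first exact: measurableC.
move=> z /=; rewrite !in_itv /= => hz /andP[z0 _].
by move: (le_lt_trans z0 (le_lt_trans hz v0)); rewrite ltxx.
Qed.

Lemma cdf1 : cdfF mu 1 = 1.
Proof.
apply/eqP; rewrite eq_le cdf_le1 /= /cdfF -lee_fin fineK ?cdf_fin //.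
rewrite -H01 le_measure ?inE //.
by move=> z /=; rewrite !in_itv /= => /andP[].
Qed.

End Q.
Section Q2.
Context (R : realType) (mu : probability R R)
  (H01 : mu `[0, 1]%classic = 1%E) (Hc : continuous (cdfF mu)).

Lemma near_pt (a : R) (P : R -> Prop) :
  (\forall t \near a, P t) -> exists2 e : R, 0 < e & forall t, `|a - t| < e -> P t.
Proof.
move=> /nbhs_ballP[e /= e0 He]; exists e => // t ht; exact: He.
Qed.

Lemma cdf0 : cdfF mu 0 = 0.
Proof.
apply/eqP; rewrite eq_le cdf_ge0 andbT leNgt; apply/negP => h0.
have h2 : cdfF mu 0 / 2 < cdfF mu 0 by rewrite ltr_pdivrMr // ltr_pMr // ltr1n.
have [e e0 He] := near_pt (cvgr_gt _ (@Hc 0) _ h2).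
have := He (- (e / 2)); rewrite sub0r opprK gtr0_norm ?divr_gt0 // ltr_pdivrMr //.
rewrite ltr_pMr // ltr1n => /(_ isT).
rewrite (@cdf_neg _ mu H01 (- (e / 2))); last by rewrite ltrNl oppr0 divr_gt0.
by rewrite ltNge divr_ge0 // ltW.
Qed.

End Q2.
Section Q3.
Context (R : realType) (mu : probability R R)
  (H01 : mu `[0, 1]%classic = 1%E) (Hc : continuous (cdfF mu)).

Let Sq (y : R) := [set v : R | 0 <= v <= 1 /\ y <= cdfF mu v].

Let Sq1 y : y <= 1 -> Sq y 1.
Proof. by move=> y1; split; [rewrite lexx ler01 | rewrite (cdf1 H01)]. Qed.

Let Sq_lb y : lbound (Sq y) 0.
Proof. by move=> v [/andP[]]. Qed.

Let Sq_ne y : y <= 1 -> nonempty (Sq y).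
Proof. by move=> y1; exists 1; exact: Sq1. Qed.

Let Sq_hlb y : has_lbound (Sq y).
Proof. by exists 0; exact: Sq_lb. Qed.

Lemma qf_ge0 y : y <= 1 -> 0 <= qf mu y.
Proof. by move=> y1; apply: lb_le_inf (Sq_ne y1) (@Sq_lb y). Qed.

Lemma qf_le1 y : y <= 1 -> qf mu y <= 1.
Proof. by move=> y1; apply: (ge_inf (@Sq_hlb y)); exact: Sq1. Qed.

Lemma qf_mono y1 y2 : y1 <= y2 -> y2 <= 1 -> qf mu y1 <= qf mu y2.
Proof.
move=> y12 y21; apply: lb_le_inf (Sq_ne y21) _ => v [hv hy].
apply: (ge_inf (@Sq_hlb y1)); split => //; exact: le_trans hy.
Qed.

Lemma qf_cdf y : 0 <= y <= 1 -> cdfF mu (qf mu y) = y.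
Proof.
move=> /andP[y0 y1].
have q0 := qf_ge0 y1; have q1 := qf_le1 y1.
apply/eqP; rewrite eq_le; apply/andP; split.
- rewrite leNgt; apply/negP => hq.
  have [e e0 He] := near_pt (cvgr_gt _ (@Hc (qf mu y)) _ hq).
  case: (eqVneq (qf mu y) 0) => [qe0|qn0].
    by move: hq; rewrite qe0 (cdf0 H01 Hc) ltNge y0.
  have qp : 0 < qf mu y by rewrite lt_neqAle eq_sym qn0.
  set m := Num.min e (qf mu y).
  have m0 : 0 < m by rewrite lt_min e0.
  have me : m <= e by rewrite ge_min lexx.
  have mq : m <= qf mu y by rewrite ge_min lexx orbT.
  have Ht : Sq y (qf mu y - m / 2).
    split.
      apply/andP; split; last by rewrite (le_trans _ q1) // lerBlDr lerDl divr_ge0 // ltW.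
      by rewrite subr_ge0 (le_trans _ mq) // ler_pdivrMr // ler_pMr // ler1n.
    apply/ltW/He; rewrite opprB addrC subrK gtr0_norm ?divr_gt0 //.
    by rewrite (lt_le_trans _ me) // ltr_pdivrMr // ltr_pMr // ltr1n.
  have := ge_inf (@Sq_hlb y) Ht; rewrite -/(qf mu y) => h.
  have : 0 < m / 2 by rewrite divr_gt0.
  move: h; lra.
- rewrite leNgt; apply/negP => hq.
  have [e e0 He] := near_pt (cvgr_lt _ (@Hc (qf mu y)) _ hq).
  have [v Sv hv] := inf_adherent e0 (conj (Sq_ne y1) (@Sq_hlb y)).
  have qv := ge_inf (@Sq_hlb y) Sv.
  have := He v; rewrite distrC ger0_norm ?subr_ge0 // ltrBlDl => H.
  have hv' : v < qf mu y + e by exact: hv.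
  have := H hv'.
  by case: Sv => _ hy; rewrite ltNge hy.
Qed.

End Q3.
Section Bid.
Context (R : realType) (K : nat) (pi : 'I_K.+1 -> R)
  (Hpi0 : forall l, 0 <= pi l) (Hpi1 : \sum_(l < K.+1) pi l = 1)
  (Finv : R -> R)
  (Fmono : forall y1 y2, y1 <= y2 -> y2 <= 1 -> Finv y1 <= Finv y2)
  (Fge0 : forall y, y <= 1 -> 0 <= Finv y).

Lemma PiE j : Pi pi j = \sum_(l < K.+1) ((l < j)%N%:R * pi l).
Proof.
rewrite /Pi big_mkcond; apply: eq_bigr => l _.
by case: (l < j)%N; rewrite ?mul1r ?mul0r.
Qed.

Lemma Pi_ge0 j : 0 <= Pi pi j.
Proof. by rewrite /Pi sumr_ge0. Qed.

Lemma Pi_mono j1 j2 : (j1 <= j2)%N -> Pi pi j1 <= Pi pi j2.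
Proof.
move=> h; rewrite !PiE; apply: ler_sum => l _; apply: ler_wpM2r => //.
case E: (l < j1)%N; last by rewrite ler0n.
by rewrite (leq_trans E h).
Qed.

Lemma Pi_le1 j : Pi pi j <= 1.
Proof.
rewrite -Hpi1 PiE; apply: ler_sum => l _.
by case: (l < j)%N; rewrite ?mul1r ?mul0r.
Qed.

Lemma Pi_compl (j : nat) : 1 - Pi pi j = \sum_(l < K.+1 | (j <= l)%N) pi l.
Proof.
rewrite -Hpi1 (bigID (fun l : 'I_K.+1 => (l < j)%N)) /= /Pi addrC addrK.
by apply: eq_bigl => l; rewrite -leqNgt.
Qed.

Let q (j : nat) := Finv (Pi pi j).

Lemma q_mono j1 j2 : (j1 <= j2)%N -> q j1 <= q j2.
Proof. by move=> h; apply: Fmono; [exact: Pi_mono | exact: Pi_le1]. Qed.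

Lemma q_ge0 j : 0 <= q j.
Proof. exact/Fge0/Pi_le1. Qed.

Let M v := \max_(l < K.+1 | (l == 0%N :> nat) || (Finv (Pi pi l) < v)) (l : nat).

Lemma M_le v : (M v <= K)%N.
Proof. by apply/bigmax_leqP => l _; rewrite -ltnS ltn_ord. Qed.

Lemma qbid_val v : (qbid pi Finv v : nat) = M v.
Proof. by rewrite /qbid inordK // ltnS M_le. Qed.

Lemma qbid_ge (j : nat) v : (0 < j)%N -> (j <= K)%N ->
  (j <= qbid pi Finv v)%N = (q j < v).
Proof.
move=> j0 jK; rewrite qbid_val.
apply/idP/idP => [|h]; last first.
  have jK' : (j < K.+1)%N by rewrite ltnS.
  by apply: (leq_bigmax_cond (Ordinal jK') (F := fun l : 'I_K.+1 => (l : nat))); rewrite /= h orbT.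
apply: contraLR; rewrite -leNgt -ltnNge => h.
rewrite /M -(prednK j0) ltnS; apply/bigmax_leqP => l /orP[/eqP ->|hl] //.
rewrite -ltnS (prednK j0).
case: (ltnP l j) => // hjl.
by move: (le_lt_trans (q_mono hjl) hl); rewrite ltNge h.
Qed.

Lemma qbid_neg v : v < 0 -> qbid pi Finv v = ord0.
Proof.
move=> v0; apply/val_inj => /=.
case E: (qbid pi Finv v : nat) => [//|m].
have := @qbid_ge m.+1 v isT; rewrite -E leqnn -ltnS ltn_ord => /(_ isT) /esym.
by rewrite -/(q _) ltNge (le_trans (ltW v0) (q_ge0 _)).
Qed.

Let U (j : nat) := [set z : R | (j <= qbid pi Finv z)%N].

Lemma U_meas j : measurable (U j).
Proof.
case: (posnP j) => [->|j0].
  by rewrite (_ : U 0 = setT) //; apply/seteqP; split => z //=.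
case: (leqP j K) => jK.
  rewrite (_ : U j = `]q j, +oo[%classic) //.
  by apply/seteqP; split => z; rewrite /U /= in_itv /= andbT (qbid_ge _ j0 jK).
rewrite (_ : U j = set0) //; apply/seteqP; split => z //=.
by rewrite /U /= => h; move: (leq_trans h (leq_ord _)); rewrite leqNgt jK.
Qed.

Lemma qbid_meas (b : 'I_K.+1) : measurable [set z : R | qbid pi Finv z == b].
Proof.
rewrite (_ : [set z | _] = U b `\` U b.+1); first exact: measurableD (U_meas _) (U_meas _).
apply/seteqP; split => z /=.
  by rewrite /U /= => /eqP ->; rewrite leqnn ltnn.
rewrite /U /= => -[h1 h2]; apply/eqP/val_inj/eqP; rewrite eqn_leq h1 leqNgt andbT; apply/negP.
exact: h2.
Qed.

End Bid.
Lemma bounded_by (R : realType) (T : Type) (A : set T) (f : T -> R) (c : R) :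
  (forall x, A x -> `|f x| <= c) -> [bounded f x | x in A].
Proof.
move=> h; exists c; split; first exact: num_real.
by move=> M cM x Ax; apply: le_trans (h x Ax) (ltW cM).
Qed.

Lemma ind_gt (R : realType) (a w : R) : (a < w)%R%:R = \1_(`]a, +oo[%classic) w :> R.
Proof.
rewrite indicE; case: (boolP (a < w)%R) => h.
  by rewrite mem_set //= in_itv /= h.
by rewrite memNset //= in_itv /= andbT; apply/negP.
Qed.

Lemma ind_lt (R : realType) (a w : R) : (w < a)%R%:R = \1_(`]-oo, a[%classic) w :> R.
Proof.
rewrite indicE; case: (boolP (w < a)%R) => h.
  by rewrite mem_set //= in_itv /= h.
by rewrite memNset //= in_itv /=; apply/negP.
Qed.
Section Pay.
Context (R : realType) (K : nat) (sfun : R -> 'I_K.+1) (q : nat -> R)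
  (hq : forall (j : nat) z, (0 < j)%N -> (j <= K)%N -> (j <= sfun z)%N = (q j < z))
  (q0 : forall j, 0 <= q j) (X : 'I_K.+1 -> R).

Let d (j : 'I_K.+1) := X j - X (inord j.-1).

Lemma tele (m : nat) : (m <= K)%N ->
  X (inord m) = X ord0 + \sum_(j < K.+1 | (0 < j)%N) d j * (j <= m)%N%:R.
Proof.
elim: m => [_|m IH hm].
  rewrite big1 ?addr0; last first.
    move=> j j0; have -> : (j <= 0)%N = false by rewrite leqn0; apply/negbTE; rewrite -lt0n.
    by rewrite mulr0.
  by congr X; apply/val_inj; rewrite /= inordK.
have hm1 : (m.+1 < K.+1)%N by rewrite ltnS.
have hm0 : (m < K.+1)%N by rewrite ltnS ltnW.
rewrite (bigD1 (inord m.+1)) /= ?inordK // leqnn mulr1.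
have -> : \sum_(j < K.+1 | (0 < j)%N && (j != inord m.+1)) d j * (j <= m.+1)%N%:R
        = \sum_(j < K.+1 | (0 < j)%N && (j != inord m.+1)) d j * (j <= m)%N%:R.
  apply: eq_bigr => j /andP[_ hj]; congr (_ * _%:R).
  rewrite leq_eqVlt ltnS; case: eqP => // h; exfalso; move/negP: hj; apply.
  by apply/eqP/val_inj; rewrite /= inordK.
have := IH (ltnW hm); rewrite (bigD1 (inord m.+1)) /= ?inordK // ltnn mulr0 add0r => E.
rewrite addrCA -E /d inordK //=.
by rewrite subrK.
Qed.

Lemma stepX w : X (sfun w) = X ord0 + \sum_(j < K.+1 | (0 < j)%N) d j * (q j < w)%R%:R.
Proof.
have := tele (leq_ord (sfun w)); rewrite inord_val => ->; congr (_ + _).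
by apply: eq_bigr => j j0; rewrite hq // leq_ord.
Qed.

Let lam := @lebesgue_measure R.

Lemma lam_itv z : 0 <= z -> lam `[0, z]%classic = z%:E.
Proof.
move=> z0; rewrite /lam lebesgue_measure_itv /= lte_fin.
case: ltP => h; first by rewrite oppr0 adde0.
by have -> : z = 0 by apply/eqP; rewrite eq_le z0 h.
Qed.

Lemma int_ind_itv z j : 0 <= z ->
  lam.-integrable `[0, z]%classic (EFin \o (fun w => (q j < w)%R%:R)).
Proof.
move=> z0; apply: measurable_bounded_integrable => //.
- by rewrite [X in (X < _)%E](_ : _ = z%:E) ?ltry //; exact: lam_itv.
- rewrite (_ : (fun w => _) = \1_(`]q j, +oo[%classic)).
    exact: measurable_indic.
  by apply: funext => w; rewrite ind_gt.
- by apply: (bounded_by (c := 1)) => w _; case: (q j < w)%R; rewrite ?normr1 ?normr0.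
Qed.

Lemma RI_ind z j : 0 <= z ->
  Rintegral lam `[0, z]%classic (fun w => (q j < w)%R%:R) = Num.max (z - q j) 0.
Proof.
move=> z0; rewrite /Rintegral.
rewrite (_ : (fun w => ((q j < w)%R%:R)%:E) = (fun w => (\1_(`]q j, +oo[%classic) w)%:E)); last first.
  by apply: funext => w; rewrite ind_gt.
rewrite integral_indic //.
rewrite (_ : _ `&` _ = `]q j, z]%classic); last first.
  apply/seteqP; split => w /=; rewrite !in_itv /= ?andbT.
    by move=> [h1 /andP[_ h2]]; rewrite h1 h2.
  by move=> /andP[h1 h2]; split => //; rewrite h2 andbT (le_trans (q0 j)) // ltW.
have E : lam `]q j, z]%classic = (if q j < z then (z - q j)%:E else 0%E).
  by rewrite /lam lebesgue_measure_itv /= lte_fin; case: ltP.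
transitivity (fine (if q j < z then (z - q j)%:E else 0%E)); first by congr fine; exact: E.
case: ltP => h /=.
  by apply/esym/max_idPl; rewrite subr_ge0 ltW.
by apply/esym/max_idPr; rewrite subr_le0.
Qed.

Lemma RI_step z : 0 <= z ->
  Rintegral lam `[0, z]%classic (fun w => X (sfun w))
  = X ord0 * z + \sum_(j < K.+1 | (0 < j)%N) d j * Num.max (z - q j) 0.
Proof.
move=> z0.
rewrite (_ : (fun w => X (sfun w)) = (fun w => X ord0 +
     \sum_(j < K.+1 | (0 < j)%N) d j * (q j < w)%R%:R)); last first.
  by apply: funext => w; exact: stepX.
have ic : lam.-integrable `[0, z]%classic (EFin \o (fun=> X ord0)).
  apply: measurable_bounded_integrable => //.
  - by rewrite [X in (X < _)%E](_ : _ = z%:E) ?ltry //; exact: lam_itv.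
  - exact: (bounded_by (c := `|X ord0|)).
have isum : lam.-integrable `[0, z]%classic (EFin \o (fun w =>
     \sum_(j < K.+1 | (0 < j)%N) d j * (q j < w)%R%:R)).
  apply: (@eq_integrable _ _ _ lam _ _
     (fun w => \sum_(j < K.+1 | (0 < j)%N) (d j * (q j < w)%R%:R)%:E)%E).
  - exact: measurable_itv.
  - by move=> w _; rewrite /= sumEFin.
  apply: integrable_sum => [|j _]; first exact: measurable_itv.
  apply: (@eq_integrable _ _ _ lam _ _
     (fun w => (d j)%:E * (EFin \o (fun w => (q j < w)%R%:R)) w)%E).
  - exact: measurable_itv.
  - by move=> w _; rewrite /= EFinM.
  - exact/integrableZl/int_ind_itv.
rewrite RintegralD //.
rewrite Rintegral_cst //; congr (_ + _).
  by congr (_ * _); rewrite (_ : fine _ = fine (z%:E)) //; congr fine; exact: lam_itv.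
rewrite /Rintegral int_lin //; last by move=> j; exact: int_ind_itv.
rewrite /=; apply: eq_bigr => j _; congr (_ * _).
exact: RI_ind.
Qed.

Definition Hf z := X (sfun z) * z - Rintegral lam `[0, z]%classic (fun w => X (sfun w)).

Lemma Hf_E z : Hf z = \sum_(j < K.+1 | (0 < j)%N) d j * q j * (q j < z)%R%:R
                      + X ord0 * (z * (z < 0)%R%:R).
Proof.
case: (ltP z 0) => hz.
  have s0 : sfun z = ord0.
    apply/val_inj; case E: (val (sfun z)) => [|m] //=.
    have := @hq m.+1 z isT; rewrite -E leqnn leq_ord => /(_ isT) /esym.
    by rewrite ltNge (le_trans (ltW hz) (q0 _)).
  rewrite /Hf s0 set_itv_ge; last by rewrite bnd_simp -ltNge.
  rewrite Rintegral_set0 subr0 big1 ?add0r ?mulr1 //.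
  by move=> j _; rewrite ltNge (le_trans (ltW hz) (q0 _)) mulr0.
rewrite /Hf (RI_step hz) {1}(stepX z) (_ : false%:R = 0 :> R) // !mulr0 addr0.
rewrite mulrDl opprD addrACA subrr add0r big_distrl /= -sumrB.
apply: eq_bigr => j _.
case: ltP => h /=.
  rewrite (_ : Num.max (z - q j) 0 = z - q j); last by apply/max_idPl; rewrite subr_ge0 ltW.
  by ring.
rewrite (_ : Num.max (z - q j) 0 = 0); last by apply/max_idPr; rewrite subr_le0.
by ring.
Qed.

End Pay.
Section PayE.
Context (R : realType) (mu : probability R R) (H01 : mu `[0, 1]%classic = 1%E).

Definition negp (z : R) := z * (z < 0)%R%:R.

Lemma negp_patch : (EFin \o negp) = ((EFin \o (fun z : R => z)) \_ `]-oo, 0[%classic).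
Proof.
apply: funext => z; rewrite patchE /negp /=.
case: (boolP (z < 0)%R) => h.
  by rewrite mem_set /= ?in_itv //= mulr1.
by rewrite memNset /= ?in_itv //= ?mulr0 //; apply/negP.
Qed.

Lemma muN0 : mu `]-oo, 0[%classic = 0%E.
Proof.
apply/eqP; rewrite eq_le measure_ge0 andbT.
rewrite -(muC01 H01) le_measure ?inE //; first exact: measurableC.
by move=> z /=; rewrite !in_itv /= => hz /andP[z0 _]; move: (le_lt_trans z0 hz); rewrite ltxx.
Qed.

Lemma negp_int : mu.-integrable setT (EFin \o negp).
Proof.
rewrite negp_patch.
apply/(@integrable_mkcond _ _ _ mu `]-oo, 0[%classic (EFin \o (fun z : R => z)) (measurable_itv _)).
apply: null_set_integrable => //; last exact: muN0.
exact/measurable_EFinP/measurable_id.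
Qed.

Lemma negp_RI : Rintegral mu setT negp = 0.
Proof.
rewrite /Rintegral (_ : (fun x => (negp x)%:E) = EFin \o negp) //.
rewrite negp_patch -integral_mkcond null_set_integral //; last exact: muN0.
exact/measurable_EFinP/measurable_id.
Qed.

End PayE.
Section PayE2.
Context (R : realType) (K : nat) (sfun : R -> 'I_K.+1) (q : nat -> R)
  (hq : forall (j : nat) z, (0 < j)%N -> (j <= K)%N -> (j <= sfun z)%N = (q j < z))
  (q0 : forall j, 0 <= q j) (X : 'I_K.+1 -> R)
  (mu : probability R R) (H01 : mu `[0, 1]%classic = 1%E).

Let d (j : 'I_K.+1) := X j - X (inord j.-1).

Lemma ind_int (a : R) : mu.-integrable setT (EFin \o (fun z => (a < z)%R%:R)).
Proof.
rewrite (_ : (fun z => _) = \1_(`]a, +oo[%classic)); last first.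
  by apply: funext => z; rewrite ind_gt.
exact: integrable_indic.
Qed.

Lemma ind_RI (a : R) : Rintegral mu setT (fun z => (a < z)%R%:R) = fine (mu `]a, +oo[%classic).
Proof.
rewrite /Rintegral (_ : (fun z => ((a < z)%R%:R)%:E) = (fun z => (\1_(`]a, +oo[%classic) z)%:E)); last first.
  by apply: funext => z; rewrite ind_gt.
by rewrite integral_indic // setIT.
Qed.

Lemma Hf_fun : Hf sfun X = fun z => \sum_(j < K.+1 | (0 < j)%N) (d j * q j) * (q j < z)%R%:R
                                   + X ord0 * negp z.
Proof. by apply: funext => z; rewrite (Hf_E hq q0). Qed.

Lemma sum_int : mu.-integrable setT (EFin \o (fun z =>
   \sum_(j < K.+1 | (0 < j)%N) (d j * q j) * (q j < z)%R%:R)).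
Proof.
apply: (@eq_integrable _ _ _ mu _ _
   (fun z => \sum_(j < K.+1 | (0 < j)%N) ((d j * q j) * (q j < z)%R%:R)%:E)%E).
- by [].
- by move=> w _; rewrite /= sumEFin.
apply: integrable_sum => [//|j _].
apply: (@eq_integrable _ _ _ mu _ _
   (fun w => (d j * q j)%:E * (EFin \o (fun w => (q j < w)%R%:R)) w)%E).
- by [].
- by move=> w _; rewrite /= EFinM.
- by apply: integrableZl => //; exact: ind_int.
Qed.

Lemma negp_int' : mu.-integrable setT (EFin \o (fun z => X ord0 * negp z)).
Proof.
apply: (@eq_integrable _ _ _ mu _ _ (fun w => (X ord0)%:E * (negp w)%:E)%E).
- by [].
- by move=> w _; rewrite /= EFinM.
- by apply: integrableZl => //; exact: (negp_int H01).
Qed.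

Lemma Hf_int : mu.-integrable setT (EFin \o Hf sfun X).
Proof.
rewrite Hf_fun.
apply: (@eq_integrable _ _ _ mu _ _ (fun w =>
   (EFin (\sum_(j < K.+1 | (0 < j)%N) (d j * q j) * (q j < w)%R%:R)%R
    + EFin (X ord0 * negp w)%R)%E)).
- by [].
- by move=> w _; rewrite /= EFinD.
- exact: (integrableD _ sum_int negp_int').
Qed.

Lemma Hf_RI : Rintegral mu setT (Hf sfun X)
   = \sum_(j < K.+1 | (0 < j)%N) d j * q j * fine (mu `]q j, +oo[%classic).
Proof.
rewrite Hf_fun RintegralD //; [|exact: sum_int|exact: negp_int'].
rewrite RintegralZl //; last exact: (negp_int H01).
rewrite (negp_RI H01) mulr0 addr0.
rewrite /Rintegral int_lin //=; last by move=> j; exact: ind_int.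
apply: eq_bigr => j _; congr (_ * _).
exact: ind_RI.
Qed.

End PayE2.
Section Collapse.
Context (R : realType) (n K : nat) (s : 'I_n -> R -> 'I_K.+1).

Definition upd (b : {ffun 'I_n -> 'I_K.+1}) (i : 'I_n) (j : 'I_K.+1)
  : {ffun 'I_n -> 'I_K.+1} := [ffun l => if l == i then j else b l].

Lemma collapse (i : 'I_n) (h : {ffun 'I_n -> 'I_K.+1} -> R -> R) (v : 'I_n -> R) :
  \sum_(b : {ffun 'I_n -> 'I_K.+1}) \prod_(k < n)
     (if k == i then (b i == ord0)%:R * h b (v k) else (s k (v k) == b k)%:R)
  = h (upd (bprofile s v) i ord0) (v i).
Proof.
set b0 := upd (bprofile s v) i ord0.
rewrite (bigD1 b0) //= [X in _ + X]big1 ?addr0.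
  rewrite (bigD1 i) //= eqxx /b0 /upd ffunE eqxx eqxx mul1r big1 ?mulr1 //.
  by move=> k hk; rewrite (negbTE hk) ffunE (negbTE hk) /bprofile ffunE eqxx.
move=> b hb.
have [k hk] : exists k, b k != b0 k.
  apply/existsP; apply: contraNT hb => /existsPn H; apply/eqP/ffunP => k.
  by have := H k; rewrite negbK => /eqP.
rewrite (bigD1 k) //=; case: (eqVneq k i) => [ek|nk].
  rewrite ek; move: hk; rewrite ek /b0 /upd ffunE eqxx => /negbTE ->.
  by rewrite !mul0r.
move: hk; rewrite /b0 /upd ffunE (negbTE nk) /bprofile ffunE eq_sym => /negbTE ->.
by rewrite !mul0r.
Qed.

Lemma bprofile_iE v i j :
  bprofile_i s v i j = upd (upd (bprofile s v) i ord0) i j.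
Proof. by apply/ffunP => l; rewrite !ffunE; case: eqP. Qed.

Lemma bprofileE v i :
  bprofile s v = upd (upd (bprofile s v) i ord0) i (s i (v i)).
Proof. by apply/ffunP => l; rewrite !ffunE; case: eqP => // ->. Qed.

Lemma bprofile_updv v i z :
  bprofile s (updv v i z) = upd (upd (bprofile s v) i ord0) i (s i z).
Proof. by apply/ffunP => l; rewrite !ffunE /updv; case: eqP => // ->. Qed.

End Collapse.
Unset Implicit Arguments.
Theorem mainTheorem7 (R : realType) (n K : nat) (HK : (0 < K)%N)
  (D : 'I_n -> probability R R)
  (HD01 : forall i, D i `[0, 1]%classic = 1%E)
  (HDc : forall i, continuous (cdfF (D i)))
  (x : {ffun 'I_n -> 'I_K.+1} -> 'I_n -> R)
  (p : {ffun 'I_n -> 'I_K.+1} -> 'I_n -> R)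
  (Hx0 : forall b i, 0 <= x b i)
  (Hx1 : forall b, \sum_(i < n) x b i <= 1)
  (Hp : forall b i, 0 <= p b i <= 1)
  (pi : 'I_n -> 'I_K.+1 -> R)
  (Hpi0 : forall i l, 0 <= pi i l)
  (Hpi1 : forall i, \sum_(l < K.+1) pi i l = 1) :
  let s := fun i => qbid (pi i) (qf (D i)) in
  Eprod D (fun v => (\sum_(i < n) ptilde x s v i)%:E)
  = (\sum_(i < n)
       Eminus D i (fun v =>
         (\sum_(j < K.+1 | (0 < j)%N)
            \sum_(l < K.+1 | (j <= l)%N)
              pi i l
              * (x (bprofile_i s v i j) i - x (bprofile_i s v i (inord j.-1)) i)
              * qf (D i) (Pi (pi i) j))%:E))%E.
Proof.
move=> s.
pose q i (j : nat) := qf (D i) (Pi (pi i) j).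
have Fm i : forall y1 y2, y1 <= y2 -> y2 <= 1 -> qf (D i) y1 <= qf (D i) y2.
  move=> y1 y2; exact: (@qf_mono R (D i) (HD01 i) y1 y2).
have hq i : forall (j : nat) z, (0 < j)%N -> (j <= K)%N -> (j <= s i z)%N = (q i j < z).
  by move=> j z; exact: (qbid_ge (Hpi0 i) (Hpi1 i) (Fm i)).
have q0 i j : 0 <= q i j by exact: (qf_ge0 (HD01 i) (Pi_le1 (Hpi0 i) (Hpi1 i) j)).
pose Xb i b := fun j : 'I_K.+1 => x (upd b i j) i.
pose phiL (pr : 'I_n * {ffun 'I_n -> 'I_K.+1}) (k : 'I_n) (z : R) :=
  if k == pr.1 then (pr.2 pr.1 == ord0)%:R * Hf (s pr.1) (Xb pr.1 pr.2) z
  else (s k z == pr.2 k)%:R.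
pose G i b := \sum_(j < K.+1 | (0 < j)%N) \sum_(l < K.+1 | (j <= l)%N)
   pi i l * (Xb i b j - Xb i b (inord j.-1)) * q i j.
pose psiR i (b : {ffun 'I_n -> 'I_K.+1}) (k : 'I_n) (z : R) :=
  if k == i then (b i == ord0)%:R * G i b else (s k z == b k)%:R.
have ind_int k (b : 'I_K.+1) : (D k).-integrable setT (EFin \o (fun z => (s k z == b)%:R)).
  rewrite (_ : (fun z => _) = \1_[set z | s k z == b]).
    exact: integrable_indic (qbid_meas (Hpi0 k) (Hpi1 k) (Fm k) b).
  apply: funext => z; rewrite indicE; case: (boolP (s k z == b)) => h.
    by rewrite mem_set.
  by rewrite memNset //=; exact/negP.
have Lint : forall pr k, predT k -> (D k).-integrable setT (EFin \o phiL pr k).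
  move=> [i b] k _; rewrite /phiL /=.
  case: (eqVneq k i) => [->|hk]; last exact: ind_int.
  apply: (@eq_integrable _ _ _ (D i) _ _
     (fun z => ((b i == ord0)%:R)%:E * (EFin \o Hf (s i) (Xb i b)) z)%E).
  - by [].
  - by move=> z _; rewrite /= EFinM.
  by apply: integrableZl => //; exact: (Hf_int (hq i) (q0 i) _ (HD01 i)).
have Rint : forall i b k, predC1 i k -> (D k).-integrable setT (EFin \o psiR i b k).
  by move=> i b k /= hk; rewrite /psiR (negbTE hk); exact: ind_int.
have LHSeq : Eprod D (fun v => (\sum_(i < n) ptilde x s v i)%:E)
   = iterE D predT n (fun v => (\sum_(pr : 'I_n * {ffun 'I_n -> 'I_K.+1}) \prod_(k < n) phiL pr k (v k))%:E) (fun _ => 0).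
  rewrite /Eprod; congr (iterE _ _ _ _ _); apply: funext => v; congr EFin.
  rewrite (eq_bigr (fun pr => \prod_(k < n) phiL (pr.1, pr.2) k (v k))); last by move=> [a b].
  rewrite -(pair_big xpredT xpredT (fun i b => \prod_(k < n) phiL (i, b) k (v k))) /=.
  apply: eq_bigr => i _.
  rewrite /phiL /=.
  have := collapse s i (fun b z => Hf (s i) (Xb i b) z) v; move=> /= ->.
  rewrite /ptilde /xtilde /Hf /Xb.
  congr (_ * _ - _); first by rewrite -bprofileE.
  by congr (Rintegral _ _ _); apply: funext => z; rewrite bprofile_updv.
rewrite LHSeq (iterE_prod Lint).
transitivity (\sum_(i < n) iterE D (predC1 i) n
   (fun v => (\sum_(b : {ffun 'I_n -> 'I_K.+1}) \prod_(k < n) psiR i b k (v k))%:E)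
   (fun _ => 0%R))%E; last first.
  apply: eq_bigr => i _; rewrite /Eminus; congr (iterE _ _ _ _ _).
  apply: funext => v; congr EFin.
  rewrite /psiR.
  have := collapse s i (fun b (_ : R) => G i b) v; move=> /= ->.
  rewrite /G /Xb /q.
  apply: eq_bigr => j _; apply: eq_bigr => l _.
  by rewrite !bprofile_iE.
under [RHS]eq_bigr => i _ do rewrite (iterE_prod (Rint i)).
rewrite sumEFin; congr EFin.
pose F i b := \prod_(k < n) (if (k < n)%N && predT k
   then Rintegral (D k) setT (phiL (i, b) k) else phiL (i, b) k 0).
rewrite (eq_bigr (fun pr => F pr.1 pr.2)); last by move=> [a b].
rewrite -(pair_big xpredT xpredT F) /=.
apply: eq_bigr => i _; apply: eq_bigr => b _; rewrite /F; apply: eq_bigr => k _.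
rewrite ltn_ord /=.
case: (eqVneq k i) => [->|hk] /=; last first.
  congr (Rintegral _ _ _); apply: funext => z.
  by rewrite /phiL /psiR /= (negbTE hk).
rewrite /psiR eqxx.
rewrite (_ : phiL (i, b) i = fun z => (b i == ord0)%:R * Hf (s i) (Xb i b) z); last first.
  by apply: funext => z; rewrite /phiL /= eqxx.
rewrite RintegralZl //; last exact: (Hf_int (hq i) (q0 i) _ (HD01 i)).
rewrite (Hf_RI (hq i) (q0 i) _ (HD01 i)); congr (_ * _).
rewrite /G; apply: eq_bigr => j j0.
have -> : fine (D i `]q i j, +oo[%classic) = \sum_(l < K.+1 | (j <= l)%N) pi i l.
  rewrite (_ : `]q i j, +oo[%classic = ~` `]-oo, q i j]%classic); last first.
    apply/seteqP; split => z /=; rewrite !in_itv /= ?andbT.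
      by move=> h /(lt_le_trans h); rewrite ltxx.
    by move=> h; rewrite ltNge; apply/negP.
  rewrite probability_setC // -(Pi_compl (Hpi1 i)).
  rewrite -[X in _ = 1 - X](qf_cdf (HD01 i) (HDc i)); last first.
    by rewrite Pi_ge0 ?Pi_le1.
  rewrite /cdfF /q fineB //; exact: fin_num_measure.
rewrite -big_distrl -big_distrl /=.
by ring.
Qed.
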